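(* Let $\lambda>0$ and $X\sim\mathrm{ZTP}(\lambda)$. Then the Gini coefficient of $X$ is $$G = 1 - \frac{2e^{-\lambda}}{1-e^{-\lambda}}\int_0^\lambda I_0\big(2\sqrt{\lambda t}\big)\,e^{-t}\,dt + \frac{e^{-2\lambda}}{1-e^{-\lambda}}\, I_1(2\lambda).$$
   Context: A random variable $X$ has the zero-truncated Poisson distribution with parameter $\lambda>0$, written $X\sim\mathrm{ZTP}(\lambda)$, if $P_\lambda(k)=\mathbb{P}(X=k)=\frac{1}{1-e^{-\lambda}}\cdot\frac{e^{-\lambda}\lambda^k}{k!}$ for $k=1,2,\ldots$. Its mean is $\mu=\lambda/(1-e^{-\lambda})$. The Gini coefficient of a random variable $X$ with finite mean is $G=\frac12\,\mathbb{E}|X_1-X_2|/\mathbb{E}(X)$, where $X_1,X_2$ are independent copies of $X$. $I_\nu(z)=(z/2)^\nu\sum_{k\ge0}(z/2)^{2k}/[k!\,\Gamma(\nu+k+1)]$ is the modified Bessel function of the first kind of order $\nu$. *)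

(* Defs.v *)
From Stdlib Require Import Reals Factorial.
From Coquelicot Require Import Coquelicot.
Open Scope R_scope.

Definition ztp_pmf (lam : R) (k : nat) : R :=
  match k with
  | O => 0
  | S _ => / (1 - exp (- lam)) * (exp (- lam) * lam ^ k / INR (fact k))
  end.

Definition mean_nat (p : nat -> R) : R :=
  Series (fun k => INR k * p k).

(* Mean absolute difference E|X1 - X2| for independent copies X1, X2 with pmf p
   (series of nonnegative terms, so the iterated sum is the double sum). *)
Definition mean_abs_diff_nat (p : nat -> R) : R :=
  Series (fun j => Series (fun k => Rabs (INR j - INR k) * (p j * p k))).

Definition gini_nat (p : nat -> R) : R :=
  / 2 * mean_abs_diff_nat p / mean_nat p.

(* Modified Bessel function of the first kind I_n of integer order n >= 0:
   I_n(z) = sum_k (z/2)^(n+2k) / (k! Gamma(n+k+1)), with Gamma(n+k+1) = (n+k)!. *)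
Definition bessel_I (n : nat) (z : R) : R :=
  Series (fun k => (z / 2) ^ (n + 2 * k) / (INR (fact k) * INR (fact (n + k)))).

(* Main.v *)
Require Import Defs.
From Stdlib Require Import Reals Factorial Lra Lia.
From Coquelicot Require Import Coquelicot.
Open Scope R_scope.

Lemma sum_n_R (a : nat -> R) n : sum_n a (S n) = sum_n a n + a (S n).
Proof. rewrite sum_Sn. reflexivity. Qed.

Lemma is_series_lin (a b c : nat -> R) (la lb x y : R) :
  is_series a la -> is_series b lb -> (forall n, c n = x * a n + y * b n) ->
  is_series c (x * la + y * lb).
Proof.
  intros Ha Hb Hc.
  apply (is_series_ext (fun n => plus (scal x (a n)) (scal y (b n)))).
  - intro n. rewrite Hc. reflexivity.
  - apply (@is_series_plus R_AbsRing R_NormedModule);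
    apply (@is_series_scal_l R_AbsRing R_NormedModule); assumption.
Qed.

Lemma is_series_scal' (a c : nat -> R) (la x : R) :
  is_series a la -> (forall n, c n = x * a n) -> is_series c (x * la).
Proof.
  intros Ha Hc. apply (is_series_ext (fun n => scal x (a n))).
  - intro n. rewrite Hc. reflexivity.
  - apply (@is_series_scal_l R_AbsRing R_NormedModule); assumption.
Qed.

Lemma is_series_eq (a : nat -> R) (l l' : R) : is_series a l -> l = l' -> is_series a l'.
Proof. intros H ->; exact H. Qed.

Lemma is_series_ext_R (a b : nat -> R) (l : R) :
  (forall n, a n = b n) -> is_series a l -> is_series b l.
Proof. apply is_series_ext. Qed.

Lemma is_series_finite (a : nat -> R) N :
  (forall k, (N < k)%nat -> a k = 0) -> is_series a (sum_n a N).
Proof.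
  intro H. change (is_lim_seq (sum_n a) (sum_n a N)).
  apply is_lim_seq_ext_loc with (fun _ => sum_n a N); [|apply is_lim_seq_const].
  exists N. intros n Hn. induction Hn. reflexivity.
  rewrite sum_n_R, H by lia. rewrite <- IHHn. exact (eq_sym (Rplus_0_r (sum_n a N))).
Qed.

Lemma is_series_shift (a : nat -> R) (l : R) :
  is_series a l -> is_series (fun j => match j with O => 0 | S m => a m end) l.
Proof.
  intro H. apply is_series_decr_1. simpl.
  apply (is_series_ext a). reflexivity.
  eapply is_series_eq. exact H. simpl. unfold plus, opp; simpl. ring.
Qed.

Lemma exp_series x : is_series (fun n => x ^ n / INR (fact n)) (exp x).
Proof.
  apply is_series_Reals. unfold exp. destruct (exist_exp x) as [l Hl]. simpl.
  unfold exp_in in Hl. intros eps He. destruct (Hl eps He) as [N HN].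
  exists N. intros n Hn. specialize (HN n Hn).
  replace (sum_f_R0 (fun n0 : nat => x ^ n0 / INR (fact n0)) n)
   with (sum_f_R0 (fun i : nat => / INR (fact i) * x ^ i) n). exact HN.
  apply sum_eq. intros; unfold Rdiv; ring.
Qed.

Definition P (lam : R) (k : nat) : R := exp (- lam) * lam ^ k / INR (fact k).
Definition F (lam : R) (n : nat) : R := sum_n (P lam) n.
Definition P' (lam : R) (k : nat) : R := match k with O => 0 | S _ => P lam k end.
Fixpoint T (lam : R) (j : nat) : R :=
  match j with O => 0 | S m => T lam m + (F lam m - P lam 0) end.

Lemma P_pos lam k : 0 < lam -> 0 < P lam k.
Proof.
  intro H. unfold P. apply Rmult_lt_0_compat. apply Rmult_lt_0_compat.
  apply exp_pos. apply pow_lt; lra. apply Rinv_0_lt_compat. apply INR_fact_lt_0.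
Qed.

Lemma P_S lam m : INR (S m) * P lam (S m) = lam * P lam m.
Proof.
  unfold P. rewrite fact_simpl, mult_INR. simpl pow.
  field. split. apply INR_fact_neq_0. apply not_0_INR; lia.
Qed.

Lemma P0 lam : P lam 0 = exp (- lam).
Proof. unfold P. simpl. field. Qed.

Lemma P_series lam : is_series (P lam) 1.
Proof.
  eapply is_series_eq.
  apply (is_series_scal' _ _ _ (exp (-lam)) (exp_series lam)).
  intro n. unfold P. unfold Rdiv. ring.
  rewrite <- exp_plus. replace (-lam + lam) with 0 by ring. apply exp_0.
Qed.

Lemma kP_series lam : is_series (fun k => INR k * P lam k) lam.
Proof.
  apply is_series_decr_1. cbv beta.
  apply (is_series_ext (fun k => lam * P lam k)).
  intro n. rewrite P_S. reflexivity.
  eapply is_series_eq. apply (is_series_scal' _ _ _ lam (P_series lam)). reflexivity.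
  unfold plus, opp; simpl. ring.
Qed.

Lemma F_S lam n : F lam (S n) = F lam n + P lam (S n).
Proof. unfold F. apply sum_n_R. Qed.

Lemma F_0 lam : F lam 0 = P lam 0.
Proof. unfold F. apply sum_O. Qed.

Lemma F_lim lam : is_lim_seq (F lam) 1.
Proof. exact (P_series lam). Qed.

Lemma F_le1 lam n : 0 < lam -> F lam n <= 1.
Proof.
  intro H. apply (is_lim_seq_incr_compare (F lam) 1 (F_lim lam)).
  intro k. rewrite F_S. generalize (P_pos lam (S k) H). lra.
Qed.

Lemma F_ge0 lam n : 0 < lam -> 0 <= F lam n.
Proof.
  intro H. induction n. rewrite F_0. generalize (P_pos lam 0 H); lra.
  rewrite F_S. generalize (P_pos lam (S n) H); lra.
Qed.

Lemma P_le1 lam n : 0 < lam -> P lam n <= 1.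
Proof.
  intro H. destruct n. rewrite <- F_0. apply F_le1; auto.
  generalize (F_le1 lam (S n) H) (F_ge0 lam n H). rewrite F_S. lra.
Qed.

Lemma P'_series lam : is_series (P' lam) (1 - exp (- lam)).
Proof.
  assert (H0 : is_series (fun k => match k with O => P lam 0 | S _ => 0 end) (P lam 0)).
  { eapply is_series_eq. apply (is_series_finite _ 0). intros [|k] Hk; [lia|reflexivity].
    rewrite sum_O. reflexivity. }
  eapply is_series_eq. apply (is_series_lin _ _ _ _ _ 1 (-1) (P_series lam) H0).
  intros [|n]; simpl; ring.
  rewrite P0. ring.
Qed.

Lemma kP'_series lam : is_series (fun k => INR k * P' lam k) lam.
Proof.
  apply (is_series_ext (fun k => INR k * P lam k)). 2: apply kP_series.
  intros [|n]; simpl; ring.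
Qed.

Lemma sumP' lam j : sum_n (P' lam) j = F lam j - P lam 0.
Proof.
  induction j. rewrite sum_O, F_0. simpl. ring.
  rewrite sum_n_R, IHj, F_S. simpl. ring.
Qed.

Lemma ind_series lam j :
  is_series (fun k => (if (k <=? j)%nat then 1 else 0) * P' lam k) (F lam j - P lam 0).
Proof.
  rewrite <- sumP'.
  eapply is_series_eq. apply (is_series_finite _ j).
  intros k Hk. destruct (Nat.leb_spec k j). lia. ring.
  induction j. rewrite !sum_O. simpl. ring.
  rewrite !sum_n_R. f_equal. 2: { destruct (Nat.leb_spec (S j) (S j)); [ring|lia]. }
  rewrite <- IHj. apply sum_n_ext_loc. intros n Hn.
  destruct (Nat.leb_spec n j); destruct (Nat.leb_spec n (S j)); try lia; reflexivity.
Qed.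

Lemma V_series lam j :
  is_series (fun k => Rabs (INR j - INR k) * P' lam k)
            (lam - INR j * (1 - exp (- lam)) + 2 * T lam j).
Proof.
  induction j.
  - apply (is_series_ext (fun k => INR k * P' lam k)). 2: eapply is_series_eq; [apply kP'_series|simpl; ring].
    intro k. simpl. rewrite Rminus_0_l, Rabs_Ropp, Rabs_right. reflexivity. apply Rle_ge, pos_INR.
  - assert (H := is_series_lin _ _ (fun k => 1 * (Rabs (INR j - INR k) * P' lam k) + -1 * P' lam k) _ _ 1 (-1) IHj (P'_series lam) (fun n => eq_refl)).
    assert (H2 := is_series_lin _ _ (fun k => 1 * (1 * (Rabs (INR j - INR k) * P' lam k) + -1 * P' lam k) + 2 * ((if (k <=? j)%nat then 1 else 0) * P' lam k)) _ _ 1 2 H (ind_series lam j) (fun n => eq_refl)).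
    eapply is_series_eq. eapply is_series_ext_R; [|exact H2].
    + intro k. cbv beta. rewrite S_INR.
      destruct (Nat.leb_spec k j).
      * apply le_INR in H0. rewrite (Rabs_right (INR j - INR k)) by lra.
        rewrite (Rabs_right (INR j + 1 - INR k)) by lra. ring.
      * assert (INR j + 1 <= INR k) by (rewrite <- S_INR; apply le_INR; lia).
        rewrite (Rabs_left1 (INR j - INR k)) by lra.
        rewrite (Rabs_left1 (INR j + 1 - INR k)) by lra. ring.
    + simpl T. rewrite S_INR. ring.
Qed.

Lemma is_series_lin5 (a1 a2 a3 a4 a5 c : nat -> R) (l1 l2 l3 l4 l5 x1 x2 x3 x4 x5 : R) :
  is_series a1 l1 -> is_series a2 l2 -> is_series a3 l3 -> is_series a4 l4 -> is_series a5 l5 ->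
  (forall n, c n = x1 * a1 n + x2 * a2 n + x3 * a3 n + x4 * a4 n + x5 * a5 n) ->
  is_series c (x1 * l1 + x2 * l2 + x3 * l3 + x4 * l4 + x5 * l5).
Proof.
  intros H1 H2 H3 H4 H5 Hc.
  assert (G1 := is_series_lin _ _ (fun n => x1 * a1 n + x2 * a2 n) _ _ x1 x2 H1 H2 (fun n => eq_refl)).
  assert (G2 := is_series_lin _ _ (fun n => 1 * (x1 * a1 n + x2 * a2 n) + x3 * a3 n) _ _ 1 x3 G1 H3 (fun n => eq_refl)).
  assert (G3 := is_series_lin _ _ (fun n => 1 * (1 * (x1 * a1 n + x2 * a2 n) + x3 * a3 n) + x4 * a4 n) _ _ 1 x4 G2 H4 (fun n => eq_refl)).
  assert (G4 := is_series_lin _ _ (fun n => 1 * (1 * (1 * (x1 * a1 n + x2 * a2 n) + x3 * a3 n) + x4 * a4 n) + x5 * a5 n) _ _ 1 x5 G3 H5 (fun n => eq_refl)).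
  eapply is_series_eq. eapply is_series_ext_R; [|exact G4].
  intro n; rewrite Hc; ring. ring.
Qed.

Lemma ex_series_P lam : ex_series (P lam).
Proof. eexists; apply P_series. Qed.

Lemma ex_series_dom (a : nat -> R) lam : 0 < lam -> (forall n, Rabs (a n) <= P lam n) -> ex_series a.
Proof.
  intros Hl H. apply (ex_series_le a (P lam)). intro n. apply H. apply ex_series_P.
Qed.

Definition Aval lam := Series (fun j => P lam j * F lam j).
Definition Bval lam := Series (fun m => P lam m * P lam (S m)).

Lemma PF_series lam : 0 < lam -> is_series (fun j => P lam j * F lam j) (Aval lam).
Proof.
  intro Hl. apply Series_correct. apply (ex_series_dom _ lam Hl). intro n.
  generalize (P_pos lam n Hl) (F_ge0 lam n Hl) (F_le1 lam n Hl). intros.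
  rewrite Rabs_right by (apply Rle_ge; apply Rmult_le_pos; lra).
  rewrite <- (Rmult_1_r (P lam n)) at 2. apply Rmult_le_compat_l; lra.
Qed.

Lemma PP_series lam : 0 < lam -> is_series (fun m => P lam m * P lam (S m)) (Bval lam).
Proof.
  intro Hl. apply Series_correct. apply (ex_series_dom _ lam Hl). intro n.
  generalize (P_pos lam n Hl) (P_pos lam (S n) Hl) (P_le1 lam (S n) Hl). intros.
  rewrite Rabs_right by (apply Rle_ge; apply Rmult_le_pos; lra).
  rewrite <- (Rmult_1_r (P lam n)) at 2. apply Rmult_le_compat_l; lra.
Qed.

Definition tel lam j := match j with O => F lam 0 ^ 2 | S m => F lam (S m) ^ 2 - F lam m ^ 2 end.

Lemma tel_series lam : is_series (tel lam) 1.
Proof.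
  assert (E : forall N, sum_n (tel lam) N = F lam N * F lam N).
  { induction N. rewrite sum_O. simpl. ring.
    rewrite sum_n_R, IHN. simpl. ring. }
  change (is_lim_seq (sum_n (tel lam)) 1).
  apply is_lim_seq_ext with (fun N => F lam N * F lam N). intro; rewrite E; reflexivity.
  replace (Finite 1) with (Finite (1 * 1)) by (f_equal; ring).
  apply is_lim_seq_mult'; apply F_lim.
Qed.

Lemma T_formula lam m :
  T lam (S m) = INR (S m) * (F lam m - P lam 0) - lam * (F lam m - P lam m).
Proof.
  induction m.
  - simpl. rewrite F_0. ring.
  - change (T lam (S (S m))) with (T lam (S m) + (F lam (S m) - P lam 0)).
    rewrite IHm. rewrite F_S. rewrite (S_INR (S m)).
    assert (E := P_S lam m). rewrite S_INR in E. rewrite S_INR. nra.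
Qed.

Lemma key_identity lam j :
  P lam j * T lam j =
  lam * (1 * (match j with O => 0 | S m => P lam m * F lam m end)
       + (- P lam 0) * (match j with O => 0 | S m => P lam m end)
       + (-1) * tel lam j + 1 * (P lam j * F lam j)
       + 1 * (match j with O => 0 | S m => P lam m * P lam (S m) end)).
Proof.
  destruct j as [|m].
  - simpl. rewrite F_0. ring.
  - rewrite T_formula. unfold tel. rewrite F_S.
    replace (P lam (S m) * (INR (S m) * (F lam m - P lam 0) - lam * (F lam m - P lam m)))
      with ((INR (S m) * P lam (S m)) * (F lam m - P lam 0) - lam * P lam (S m) * (F lam m - P lam m)) by ring.
    rewrite P_S. ring.
Qed.

Lemma W_series lam : 0 < lam ->
  is_series (fun j => P lam j * T lam j)
    (lam * (2 * Aval lam - 1 - exp (- lam) + Bval lam)).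
Proof.
  intro Hl.
  assert (H := is_series_lin5 _ _ _ _ _ (fun j => (1 * (match j with O => 0 | S m => P lam m * F lam m end)
       + (- P lam 0) * (match j with O => 0 | S m => P lam m end)
       + (-1) * tel lam j + 1 * (P lam j * F lam j)
       + 1 * (match j with O => 0 | S m => P lam m * P lam (S m) end))) _ _ _ _ _ 1 (- P lam 0) (-1) 1 1
    (is_series_shift _ _ (PF_series lam Hl)) (is_series_shift _ _ (P_series lam))
    (tel_series lam) (PF_series lam Hl) (is_series_shift _ _ (PP_series lam Hl)) (fun n => eq_refl)).
  eapply is_series_eq. eapply is_series_scal'. exact H. intro n. apply key_identity.
  rewrite P0. ring.
Qed.

Lemma ztp_eq lam k : ztp_pmf lam k = / (1 - exp (- lam)) * P' lam k.
Proof. destruct k; simpl. ring. reflexivity. Qed.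

Lemma mean_eq lam : mean_nat (ztp_pmf lam) = / (1 - exp (- lam)) * lam.
Proof.
  unfold mean_nat. apply is_series_unique.
  eapply is_series_scal'. apply kP'_series. intro n. rewrite ztp_eq. ring.
Qed.

Lemma mad_eq lam : 0 < lam ->
  mean_abs_diff_nat (ztp_pmf lam) =
  / (1 - exp (- lam)) * / (1 - exp (- lam)) * (2 * (lam * (2 * Aval lam - 1 - exp (- lam) + Bval lam))).
Proof.
  intro Hl. unfold mean_abs_diff_nat.
  set (q := 1 - exp (- lam)).
  rewrite (Series_ext _ (fun j => / q * / q * (P' lam j * (lam - INR j * q + 2 * T lam j)))).
  2: { intro j. apply is_series_unique. eapply is_series_eq.
       apply (is_series_scal' _ _ _ (/ q * / q * P' lam j) (V_series lam j)). intro n. rewrite !ztp_eq. fold q. ring.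
       fold q. ring. }
  apply is_series_unique. eapply is_series_scal'. 2: intro; reflexivity.
  assert (H1 := is_series_lin _ _ (fun j => lam * P' lam j + (- q) * (INR j * P' lam j)) _ _ lam (-q) (P'_series lam) (kP'_series lam) (fun n => eq_refl)).
  assert (H2 := is_series_lin _ _ (fun j => 1 * (lam * P' lam j + (- q) * (INR j * P' lam j)) + 2 * (P lam j * T lam j)) _ _ 1 2 H1 (W_series lam Hl) (fun n => eq_refl)).
  eapply is_series_eq. eapply is_series_ext_R; [|exact H2].
  intros [|n]; simpl; ring.
  fold q. ring.
Qed.

Lemma bessel1_eq lam : exp (- (2 * lam)) * bessel_I 1 (2 * lam) = Bval lam.
Proof.
  unfold bessel_I. rewrite <- Series_scal_l. unfold Bval. apply Series_ext. intro k.
  replace (2 * lam / 2) with lam by field.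
  replace (1 + 2 * k)%nat with (k + S k)%nat by lia. rewrite pow_add.
  replace (- (2 * lam)) with (- lam + - lam) by ring. rewrite exp_plus.
  change (fact (1 + k)) with (fact (S k)).
  unfold P. field. split; apply INR_fact_neq_0.
Qed.

Lemma is_derive_eq (f : R -> R) x (l l' : R) : is_derive f x l -> l = l' -> is_derive f x l'.
Proof. intros H ->; exact H. Qed.

Lemma is_derive_ext_R (f g : R -> R) (x l : R) :
  (forall t, f t = g t) -> is_derive f x l -> is_derive g x l.
Proof. apply is_derive_ext. Qed.

Lemma plus_R (a b : R) : plus a b = a + b.
Proof. reflexivity. Qed.

Definition Eexp (k : nat) (t : R) : R := exp (- t) * sum_n (fun m => t ^ m / INR (fact m)) k.

Lemma piece_derive k t :
  is_derive (fun t => exp (- t) * (t ^ (S k) / INR (fact (S k)))) t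
    (exp (- t) * (t ^ k / INR (fact k)) - exp (- t) * (t ^ (S k) / INR (fact (S k)))).
Proof.
  eapply is_derive_eq. auto_derive. exact I. reflexivity.
  replace (match k with 0%nat => 1 | S _ => INR k + 1 end) with (INR (S k)) by reflexivity.
  replace (fact k + k * fact k)%nat with (S k * fact k)%nat by (simpl; lia).
  rewrite (fact_simpl k), mult_INR. simpl pow. change (@opp R_AbsRing one) with (-1).
  field. split. apply INR_fact_neq_0. apply not_0_INR; lia.
Qed.

Lemma Eexp_derive k t : is_derive (Eexp k) t (- (exp (- t) * (t ^ k / INR (fact k)))).
Proof.
  induction k.
  - apply (is_derive_ext_R (fun t => exp (- t))).
    intro x. unfold Eexp. rewrite sum_O. change (INR (fact 0)) with 1. rewrite pow_O. field.
    eapply is_derive_eq. auto_derive. exact I. reflexivity.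
    change (@opp R_AbsRing one) with (-1). simpl pow. change (INR (fact 0)) with 1. field.
  - apply (is_derive_ext_R (fun t => plus (Eexp k t) (exp (- t) * (t ^ (S k) / INR (fact (S k)))))).
    intro x. unfold Eexp. rewrite sum_n_R, plus_R. ring.
    eapply is_derive_eq. exact (@is_derive_plus R_AbsRing R_NormedModule _ _ t _ _ IHk (piece_derive k t)).
    rewrite plus_R. ring.
Qed.

Lemma sum_zero k : @eq R (sum_n (fun m => 0 ^ m / INR (fact m)) k) 1.
Proof.
  induction k.
  - rewrite sum_O. rewrite pow_O. change (INR (fact 0)) with 1. field.
  - rewrite sum_n_R, IHk. rewrite pow_ne_zero by lia. field. apply INR_fact_neq_0.
Qed.

Lemma Eexp_0 k : Eexp k 0 = 1.
Proof. unfold Eexp. rewrite sum_zero, Ropp_0, exp_0. ring. Qed.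

Lemma Eexp_lam lam k : Eexp k lam = F lam k.
Proof.
  unfold Eexp, F. induction k.
  rewrite !sum_O. unfold P. rewrite !pow_O. change (INR (fact 0)) with 1. field.
  rewrite !sum_n_R, <- IHk. unfold P. field. apply INR_fact_neq_0.
Qed.

Definition c (lam : R) (k : nat) : R := lam ^ k / (INR (fact k) * INR (fact k)).
Definition u (lam : R) (k : nat) : R := lam ^ k / INR (fact k) * (1 - F lam k).

Lemma term_RInt lam k :
  is_RInt (fun t => c lam k * t ^ k * exp (- t)) 0 lam (u lam k).
Proof.
  assert (H := is_RInt_derive (fun t => - (lam ^ k / INR (fact k)) * Eexp k t)
       (fun t => c lam k * t ^ k * exp (- t)) 0 lam).
  replace (u lam k) with (minus (- (lam ^ k / INR (fact k)) * Eexp k lam) (- (lam ^ k / INR (fact k)) * Eexp k 0)).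
  apply H.
  - intros x _. cbv beta.
    assert (E := is_derive_scal _ x (- (lam ^ k / INR (fact k))) _ (Eexp_derive k x)).
    replace (c lam k * x ^ k * exp (- x)) with (- (lam ^ k / INR (fact k)) * - (exp (- x) * (x ^ k / INR (fact k)))).
    exact E. unfold c. field. apply INR_fact_neq_0.
  - intros x _. apply (@ex_derive_continuous R_AbsRing R_NormedModule). auto_derive. exact I.
  - rewrite Eexp_0, Eexp_lam. unfold minus, plus, opp, u; simpl. ring.
Qed.

Definition gN lam N t := sum_n (fun k => c lam k * t ^ k * exp (- t)) N.

Lemma is_RInt_ext_R (f g : R -> R) a b (l : R) :
  (forall x, f x = g x) -> is_RInt f a b l -> is_RInt g a b l.
Proof. intros H. apply is_RInt_ext. intros; apply H. Qed.

Lemma gN_RInt lam N : is_RInt (gN lam N) 0 lam (sum_n (u lam) N).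
Proof.
  induction N.
  - apply (is_RInt_ext_R (fun t => c lam 0 * t ^ 0 * exp (- t))).
    intros; unfold gN; rewrite sum_O; reflexivity.
    rewrite sum_O. apply term_RInt.
  - apply (is_RInt_ext_R (fun t => plus (gN lam N t) (c lam (S N) * t ^ (S N) * exp (- t)))).
    intros; unfold gN; rewrite sum_n_R; reflexivity.
    rewrite sum_Sn. exact (@is_RInt_plus R_NormedModule _ _ 0 lam _ _ IHN (term_RInt lam (S N))).
Qed.

Lemma c_pos lam k : 0 < lam -> 0 < c lam k.
Proof.
  intro H. unfold c. apply Rdiv_lt_0_compat. apply pow_lt; lra.
  apply Rmult_lt_0_compat; apply INR_fact_lt_0.
Qed.

Lemma c_radius lam : 0 < lam -> CV_radius (c lam) = p_infty.
Proof.
  intro Hl. apply CV_radius_infinite_DAlembert.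
  intro n. generalize (c_pos lam n Hl); lra.
  apply is_lim_seq_ext with (fun n => lam * / (INR (S n) * INR (S n))).
  { intro n. unfold c. rewrite fact_simpl, mult_INR. simpl pow.
    rewrite Rabs_right. field. split. apply INR_fact_neq_0. split. apply not_0_INR; lia.
    apply pow_nonzero; lra.
    apply Rle_ge. apply Rmult_le_pos. apply Rmult_le_pos. apply Rmult_le_pos. lra.
    apply pow_le; lra. left; apply Rinv_0_lt_compat.
    apply Rmult_lt_0_compat; apply Rmult_lt_0_compat; try apply INR_fact_lt_0; apply lt_0_INR; lia.
    left; apply Rinv_0_lt_compat. apply Rdiv_lt_0_compat. apply pow_lt; lra.
    apply Rmult_lt_0_compat; apply INR_fact_lt_0. }
  replace (Finite 0) with (Rbar_mult lam (Rbar_inv p_infty)) by (simpl; f_equal; ring).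
  apply is_lim_seq_scal_l. apply is_lim_seq_inv. 2: discriminate.
  apply is_lim_seq_le_p_loc with (fun n => INR (S n)).
  exists 0%nat. intros n _. rewrite <- (Rmult_1_r (INR (S n))) at 1.
  apply Rmult_le_compat_l. apply pos_INR. apply (le_INR 1); lia.
  apply is_lim_seq_incr_1 with (u := INR). apply is_lim_seq_INR.
Qed.

Lemma ex_series_ct lam t : 0 < lam -> ex_series (fun k => c lam k * t ^ k).
Proof.
  intro Hl. apply ex_series_Rabs. apply CV_disk_inside. rewrite c_radius by exact Hl. exact I.
Qed.

Lemma bessel0_eq lam t : 0 < lam -> 0 <= t ->
  bessel_I 0 (2 * sqrt (lam * t)) = PSeries (c lam) t.
Proof.
  intros Hl Ht. unfold bessel_I, PSeries. apply Series_ext. intro k.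
  replace (2 * sqrt (lam * t) / 2) with (sqrt (lam * t)) by field.
  change (0 + 2 * k)%nat with (2 * k)%nat. change (fact (0 + k)) with (fact k).
  rewrite pow_mult, pow2_sqrt by nra. rewrite Rpow_mult_distr. unfold c. field.
  apply INR_fact_neq_0.
Qed.

Lemma Series_zero : Series (fun _ => 0) = 0.
Proof.
  apply is_series_unique. eapply is_series_eq. apply (is_series_finite _ 0).
  intros; reflexivity. rewrite sum_O. reflexivity.
Qed.

Definition Rt lam N := Series (fun k => c lam (S N + k) * lam ^ (S N + k)).

Lemma tail_eq lam t N : 0 < lam ->
  Series (fun k => c lam k * t ^ k) - sum_n (fun k => c lam k * t ^ k) N
  = Series (fun k => c lam (S N + k) * t ^ (S N + k)).
Proof.
  intro Hl. rewrite (Series_incr_n _ (S N)). 2: lia. 2: apply ex_series_ct; auto.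
  rewrite sum_n_Reals. simpl pred. ring.
Qed.

Lemma tail_bound lam t N : 0 < lam -> 0 <= t <= lam ->
  0 <= Series (fun k => c lam (S N + k) * t ^ (S N + k)) <= Rt lam N.
Proof.
  intros Hl Ht. split.
  - rewrite <- Series_zero. apply Series_le.
    intro n. split. lra. apply Rmult_le_pos. left; apply c_pos; auto. apply pow_le; lra.
    apply (ex_series_incr_n (fun k => c lam k * t ^ k)). apply ex_series_ct; auto.
  - apply Series_le.
    intro n. split. apply Rmult_le_pos. left; apply c_pos; auto. apply pow_le; lra.
    apply Rmult_le_compat_l. left; apply c_pos; auto. apply pow_incr; lra.
    apply (ex_series_incr_n (fun k => c lam k * lam ^ k)). apply ex_series_ct; auto.
Qed.

Lemma Rt_lim lam : 0 < lam -> is_lim_seq (Rt lam) 0.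
Proof.
  intro Hl.
  apply is_lim_seq_ext with (fun N => Series (fun k => c lam k * lam ^ k) - sum_n (fun k => c lam k * lam ^ k) N).
  intro N. unfold Rt. apply tail_eq; auto.
  replace (Finite 0) with (Finite (Series (fun k => c lam k * lam ^ k) - Series (fun k => c lam k * lam ^ k))) by (f_equal; ring).
  apply is_lim_seq_minus'. apply is_lim_seq_const.
  apply (Series_correct _ (ex_series_ct lam lam Hl)).
Qed.

Definition hfun lam t := bessel_I 0 (2 * sqrt (lam * t)) * exp (- t).

Lemma h_bound lam t N : 0 < lam -> 0 <= t <= lam ->
  Rabs (hfun lam t - gN lam N t) <= Rt lam N.
Proof.
  intros Hl Ht. unfold hfun, gN. rewrite bessel0_eq by (auto; lra). unfold PSeries.
  replace (sum_n (fun k => c lam k * t ^ k * exp (- t)) N)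
    with (sum_n (fun k => c lam k * t ^ k) N * exp (- t)).
  2: { symmetry. apply (sum_n_mult_r (K := R_Ring)). }
  replace (Series (fun k => c lam k * t ^ k) * exp (- t) - sum_n (fun k => c lam k * t ^ k) N * exp (- t))
    with ((Series (fun k => c lam k * t ^ k) - sum_n (fun k => c lam k * t ^ k) N) * exp (- t)) by ring.
  rewrite tail_eq by auto. destruct (tail_bound lam t N Hl Ht) as [H1 H2].
  assert (0 < exp (- t) <= 1).
  { split. apply exp_pos. rewrite <- exp_0. destruct (Req_dec t 0). subst. rewrite Ropp_0. lra.
    left; apply exp_increasing. lra. }
  rewrite Rabs_right by (apply Rle_ge, Rmult_le_pos; lra). nra.
Qed.

Lemma ex_RInt_h lam : 0 < lam -> ex_RInt (hfun lam) 0 lam.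
Proof.
  intro Hl.
  apply (ex_RInt_ext (fun t => PSeries (c lam) t * exp (- t))).
  { intros x Hx. rewrite Rmin_left in Hx by lra. unfold hfun. rewrite bessel0_eq by lra. reflexivity. }
  apply (@ex_RInt_continuous R_CompleteNormedModule). intros z _.
  apply (@continuous_mult R_UniformSpace R_AbsRing (PSeries (c lam)) (fun t => exp (- t)) z).
  - apply continuity_pt_filterlim. apply PSeries_continuity. rewrite c_radius by exact Hl. exact I.
  - apply (@ex_derive_continuous R_AbsRing R_NormedModule). auto_derive. exact I.
Qed.

Lemma J_series lam : 0 < lam -> is_series (u lam) (RInt (hfun lam) 0 lam).
Proof.
  intro Hl. set (J := RInt (hfun lam) 0 lam).
  assert (HJ : is_RInt (hfun lam) 0 lam J) by exact (RInt_correct _ _ _ (ex_RInt_h lam Hl)).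
  assert (Hb : forall N, Rabs (J - sum_n (u lam) N) <= lam * Rt lam N).
  { intro N.
    assert (HD := @is_RInt_minus R_NormedModule _ _ 0 lam _ _ HJ (gN_RInt lam N)).
    assert (Hn : forall x, Rmin 0 lam <= x <= Rmax 0 lam -> norm (minus (hfun lam x) (gN lam N x)) <= Rt lam N).
    { intros x Hx. rewrite Rmin_left, Rmax_right in Hx by lra. exact (h_bound lam x N Hl Hx). }
    assert (K := norm_RInt_le_const_abs _ _ _ _ _ Hn HD).
    replace (Rabs (lam - 0)) with lam in K by (rewrite Rminus_0_r, Rabs_right; lra).
    exact K. }
  change (is_lim_seq (sum_n (u lam)) J).
  apply is_lim_seq_le_le with (fun N => J - lam * Rt lam N) (fun N => J + lam * Rt lam N).
  - intro N. specialize (Hb N). apply Rabs_le_between in Hb. lra.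
  - replace (Finite J) with (Finite (J - lam * 0)) by (f_equal; ring).
    apply is_lim_seq_minus'. apply is_lim_seq_const.
    replace (lam * 0) with (lam * 0)%R by reflexivity.
    apply (is_lim_seq_scal_l _ lam 0 (Rt_lim lam Hl)).
  - replace (Finite J) with (Finite (J + lam * 0)) by (f_equal; ring).
    apply is_lim_seq_plus'. apply is_lim_seq_const.
    apply (is_lim_seq_scal_l _ lam 0 (Rt_lim lam Hl)).
Qed.

Lemma J_eq lam : 0 < lam ->
  exp (- lam) * RInt (fun t => bessel_I 0 (2 * sqrt (lam * t)) * exp (- t)) 0 lam = 1 - Aval lam.
Proof.
  intro Hl. change (fun t => bessel_I 0 (2 * sqrt (lam * t)) * exp (- t)) with (hfun lam).
  assert (H1 := is_series_scal' _ (fun k => exp (- lam) * u lam k) _ (exp (- lam)) (J_series lam Hl) (fun n => eq_refl)).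
  assert (H2 := is_series_lin _ _ (fun k => exp (- lam) * u lam k) _ _ 1 (-1) (P_series lam) (PF_series lam Hl)).
  rewrite <- (is_series_unique _ _ H1). apply is_series_unique.
  eapply is_series_eq. apply H2. intro n. unfold u, P. field. apply INR_fact_neq_0. ring.
Qed.

Theorem mainTheorem1 (lam : R) (hlam : 0 < lam) :
  gini_nat (ztp_pmf lam) =
    1 - 2 * exp (- lam) / (1 - exp (- lam))
          * RInt (fun t => bessel_I 0 (2 * sqrt (lam * t)) * exp (- t)) 0 lam
      + exp (- (2 * lam)) / (1 - exp (- lam)) * bessel_I 1 (2 * lam).
Proof.
  assert (Hq : 0 < 1 - exp (- lam)).
  { assert (exp (- lam) < 1). rewrite <- exp_0. apply exp_increasing. lra. lra. }
  unfold gini_nat. rewrite mad_eq, mean_eq by exact hlam.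
  replace (2 * exp (- lam) / (1 - exp (- lam)) * RInt (fun t => bessel_I 0 (2 * sqrt (lam * t)) * exp (- t)) 0 lam)
    with (2 / (1 - exp (- lam)) * (exp (- lam) * RInt (fun t => bessel_I 0 (2 * sqrt (lam * t)) * exp (- t)) 0 lam))
    by (field; lra).
  replace (exp (- (2 * lam)) / (1 - exp (- lam)) * bessel_I 1 (2 * lam))
    with (/ (1 - exp (- lam)) * (exp (- (2 * lam)) * bessel_I 1 (2 * lam))) by (field; lra).
  rewrite J_eq, bessel1_eq by exact hlam.
  field. lra.
Qed.
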